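(* Let $S$ be a specialisation independent scheduling rule, $V$ a finite set of variables, $G$ and $X$ p-goals, $\gamma$ a substitution and $\underline\tau$ a shifting such that $X+G\gamma\underline{\tau}$ is defined. If there is a p-SLD derivation $X+G\gamma\underline{\tau}\xrightarrow{S,D}\cdot$ via $S$, then there is a p-SLD derivation $Dr=(G\xrightarrow{S,\,D/(G\gamma\underline{\tau})}\cdot)$ via $S$ with $nvar(Dr)\cap V=\emptyset$.
   Context: A p-atom is a pair $a[p]$ of an atom $a$ and a rational priority $p$. A p-goal is a finite set of p-atoms with pairwise distinct priorities, regarded as a list ordered by increasing priority. Substitutions act on atoms and leave priorities unchanged. A clause is $h\leftarrow B$ with $h$ an atom and $B$ a p-goal. For p-goals with no common priority, $F+G=F\cup G$; $F|G$ denotes $F+G$ when all priorities of $F$ are smaller than those of $G$. A shifting $\underline{\pi}$ is a strictly increasing bijection $\mathbb{Q}\to\mathbb{Q}$ acting on priorities ($G\underline\pi$). Priority derivation step: for a p-goal $a|F$ ($a$ of least priority), clause $c=(h\leftarrow B)$, renaming $\xi$ with $var(a|F)\cap var(c\xi)=\emptyset$, idempotent relevant mgu $\theta$ of $a$ and $h\xi$, and shifting $\underline{\pi}$ with $F$, $B\xi\underline{\pi}$ sharing no priority: $a|F\xrightarrow{c\xi,\theta}(F+B\xi\underline{\pi})\theta$. A p-SLD derivation is a sequence of such steps with each renamed clause $c_j\xi_j$ variable-disjoint from the initial goal and all earlier renamed clauses; its template is the sequence of applied clauses and $nvar$ of a derivation is the union of the sets $var(c_j\xi_j)$. Lowering: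 for $c=(h\leftarrow B)$, a step $a\lambda\underline{\sigma}|(K\lambda\underline{\sigma}+X)\xrightarrow{c}(X+K\lambda\underline{\sigma}+B\xi''\underline{\theta}'')\alpha''$ is a lowering by $X$ of a step $a|K\xrightarrow{c}(K+B\xi'\underline{\theta}')\alpha'$; it is a congruent lowering by $X$ if some shifting $\underline{\rho}$ has $K\underline{\rho}=K\underline{\sigma}$ and $B\underline{\theta}'\underline{\rho}=B\underline{\theta}''$. Steps are congruent lowerings of each other if each is a congruent lowering of the other. A set $S$ of steps is complete if (i) whenever some step $G\xrightarrow{c}\cdot$ exists, some step $G\xrightarrow{c}\cdot$ lies in $S$, and (ii) $S$ contains every step that is a congruent lowering of each other with a step of $S$. $S$ is specialisation independent if whenever $Ds_1,Ds_2\in S$ and $Ds_2$ is a lowering of $Ds_1$ by $X$, $Ds_2$ is a congruent lowering of $Ds_1$ by $X$. A specialisation independent scheduling rule is a complete specialisation independent set of steps. $G\xrightarrow{S,M}R$ denotes a p-SLD derivation with template $M$ all of whose steps lie in $S$. Sub-templates: for a step $a|(F+G)\xrightarrow{c}Q=((F+G)+B\xi\underline{\pi})\alpha$, $Q/F=F\alpha$, $Q/a=B\xi\underline\pi\alpha$, $c/a=c$, $c/F=$ empty, $c/(a|F)=c$; for $F+G\xrightarrow{c}Q\xrightarrow{K}R$, recursively $(c|K)/F=(c/F)|(K/(Q/F))$. Thus $D/F$ is the subsequence of the template $D$ of clauses applied to p-atoms of $F$ or descending from $F$. *)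

(* Defs.v *)
From mathcomp Require Import all_boot all_order all_algebra.
From Stdlib Require List.
Set Implicit Arguments. Unset Strict Implicit. Unset Printing Implicit Defensive.
Import Order.TTheory GRing.Theory Num.Theory.
Local Open Scope ring_scope.

Inductive term : Type :=
| Var : nat -> term
| Fun : nat -> seq term -> term.

Definition atom := (nat * seq term)%type.

Definition subst := nat -> term.

Fixpoint term_subst (s : subst) (t : term) : term :=
  match t with
  | Var x => s x
  | Fun f ts => Fun f (map (term_subst s) ts)
  end.

Definition atom_subst (s : subst) (a : atom) : atom :=
  (a.1, map (term_subst s) a.2).

Fixpoint var_in_term (v : nat) (t : term) : Prop :=
  match t with
  | Var x => x = v
  | Fun _ ts =>
      (fix aux (l : seq term) : Prop :=
         match l with [::] => False | u :: l' => var_in_term v u \/ aux l' end) ts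
  end.

Definition var_in_atom (v : nat) (a : atom) : Prop :=
  exists2 t, List.In t a.2 & var_in_term v t.

Definition renaming (xi : nat -> nat) : Prop := bijective xi.
Definition ren_subst (xi : nat -> nat) : subst := fun v => Var (xi v).

Definition unifier (th : subst) (a b : atom) : Prop :=
  atom_subst th a = atom_subst th b.

Definition more_general (th dl : subst) : Prop :=
  exists eta : subst, forall v, dl v = term_subst eta (th v).

Definition mgu (th : subst) (a b : atom) : Prop :=
  unifier th a b /\ forall dl, unifier dl a b -> more_general th dl.

Definition idempotent (th : subst) : Prop :=
  forall v, term_subst th (th v) = th v.

Definition var_of_subst (th : subst) (v : nat) : Prop :=
  th v <> Var v \/ exists2 w, th w <> Var w & var_in_term v (th w).

Definition relevant (th : subst) (a b : atom) : Prop :=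
  forall v, var_of_subst th v -> var_in_atom v a \/ var_in_atom v b.

Definition idem_rel_mgu (th : subst) (a b : atom) : Prop :=
  mgu th a b /\ idempotent th /\ relevant th a b.

Definition patom := (atom * rat)%type.

(* A p-goal is a finite set of p-atoms with pairwise distinct priorities,
   represented canonically as the list ordered by strictly increasing
   priority. *)
Definition pgoal := seq patom.
Definition is_pgoal (G : pgoal) : Prop :=
  sorted (fun x y : patom => x.2 < y.2) G.

Definition var_in_pgoal (v : nat) (G : pgoal) : Prop :=
  exists2 x, List.In x G & var_in_atom v x.1.

Definition prio_disjoint (F G : pgoal) : Prop :=
  forall x y, List.In x F -> List.In y G -> x.2 <> y.2.

(* F + G (meaningful when prio_disjoint F G): the union, as sorted list *)
Definition pplus (F G : pgoal) : pgoal :=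
  sort (fun x y : patom => x.2 <= y.2) (F ++ G).

Definition pgoal_subst (s : subst) (G : pgoal) : pgoal :=
  map (fun x : patom => (atom_subst s x.1, x.2)) G.

Definition shifting (pi : rat -> rat) : Prop :=
  {homo pi : x y / x < y} /\ bijective pi.

Definition pgoal_shift (pi : rat -> rat) (G : pgoal) : pgoal :=
  map (fun x : patom => (x.1, pi x.2)) G.

Record clause := Clause { chead : atom; cbody : pgoal }.

Definition clause_ok (c : clause) : Prop := is_pgoal (cbody c).

Definition var_in_ren_clause (c : clause) (xi : nat -> nat) (v : nat) : Prop :=
  var_in_atom v (atom_subst (ren_subst xi) (chead c)) \/
  var_in_pgoal v (pgoal_subst (ren_subst xi) (cbody c)).

(** * Priority derivation steps
   a|F --(c xi, theta)--> (F + B xi pi) theta *)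
Record step := Step {
  s_goal : pgoal;
  s_clause : clause;
  s_ren : nat -> nat;
  s_mgu : subst;
  s_shift : rat -> rat;
  s_res : pgoal
}.

Definition ren_body (d : step) : pgoal :=
  pgoal_shift (s_shift d) (pgoal_subst (ren_subst (s_ren d)) (cbody (s_clause d))).

Definition valid_step (d : step) : Prop :=
  exists (a : patom) (F : pgoal),
    s_goal d = a :: F /\
    is_pgoal (a :: F) /\
    clause_ok (s_clause d) /\
    renaming (s_ren d) /\
    (forall v, var_in_pgoal v (a :: F) ->
               ~ var_in_ren_clause (s_clause d) (s_ren d) v) /\
    idem_rel_mgu (s_mgu d) a.1
      (atom_subst (ren_subst (s_ren d)) (chead (s_clause d))) /\
    shifting (s_shift d) /\
    prio_disjoint F (ren_body d) /\
    s_res d = pgoal_subst (s_mgu d) (pplus F (ren_body d)).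

Fixpoint chain (G : pgoal) (ds : seq step) : Prop :=
  match ds with
  | [::] => True
  | d :: ds' => [/\ s_goal d = G, valid_step d & chain (s_res d) ds']
  end.

Fixpoint apart (used : nat -> Prop) (ds : seq step) : Prop :=
  match ds with
  | [::] => True
  | d :: ds' =>
      (forall v, var_in_ren_clause (s_clause d) (s_ren d) v -> ~ used v) /\
      apart (fun v => used v \/ var_in_ren_clause (s_clause d) (s_ren d) v) ds'
  end.

Definition pSLD (G : pgoal) (ds : seq step) : Prop :=
  chain G ds /\ apart (fun v => var_in_pgoal v G) ds.

Definition template (ds : seq step) : seq clause := map s_clause ds.

Definition nvar (ds : seq step) (v : nat) : Prop :=
  exists2 d, List.In d ds & var_in_ren_clause (s_clause d) (s_ren d) v.

Definition via (S : step -> Prop) (ds : seq step) : Prop :=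
  forall d, List.In d ds -> S d.

(** Membership and
   removal of the selected p-atom are tested through its priority, which is
   exact since the priorities of a p-goal are pairwise distinct. *)
Fixpoint subtemplate (F : pgoal) (ds : seq step) : seq clause :=
  match ds with
  | [::] => [::]
  | d :: ds' =>
      match s_goal d with
      | [::] => [::]
      | a :: _ =>
          if a.2 \in map snd F then
            s_clause d ::
              subtemplate (pgoal_subst (s_mgu d)
                   (pplus (filter (fun x : patom => x.2 != a.2) F) (ren_body d))) ds'
          else subtemplate (pgoal_subst (s_mgu d) F) ds'
      end
  end.

(** * Lowerings
   d2 : a lam sig | (K lam sig + X) --c--> ...   is a lowering by X of
   d1 : a | K --c--> ... *)
Definition lowering_with (d1 d2 : step) (X : pgoal) (lam : subst)
    (sig : rat -> rat) (a : patom) (K : pgoal) : Prop :=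
  valid_step d1 /\ valid_step d2 /\ shifting sig /\ is_pgoal X /\
  s_goal d1 = a :: K /\
  s_clause d2 = s_clause d1 /\
  prio_disjoint (pgoal_shift sig (pgoal_subst lam K)) X /\
  (forall y, List.In y (pplus (pgoal_shift sig (pgoal_subst lam K)) X) ->
             sig a.2 < y.2) /\
  s_goal d2 = pgoal_shift sig (pgoal_subst lam [:: a]) ++
              pplus (pgoal_shift sig (pgoal_subst lam K)) X.

Definition lowering (d1 d2 : step) (X : pgoal) : Prop :=
  exists lam sig a K, lowering_with d1 d2 X lam sig a K.

Definition cong_lowering (d1 d2 : step) (X : pgoal) : Prop :=
  exists lam sig a K rho, lowering_with d1 d2 X lam sig a K /\
    [/\ shifting rho,
        pgoal_shift rho K = pgoal_shift sig K
      & pgoal_shift rho (pgoal_shift (s_shift d1) (cbody (s_clause d1))) =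
        pgoal_shift (s_shift d2) (cbody (s_clause d2))].

Definition cong_each_other (d1 d2 : step) : Prop :=
  (exists X, cong_lowering d1 d2 X) /\ (exists X, cong_lowering d2 d1 X).

Definition complete (S : step -> Prop) : Prop :=
  [/\ forall d, S d -> valid_step d,
      (forall (G : pgoal) (c : clause),
          (exists d, [/\ valid_step d, s_goal d = G & s_clause d = c]) ->
          exists d, [/\ S d, s_goal d = G & s_clause d = c])
    & (forall d d', S d -> valid_step d' -> cong_each_other d d' -> S d')].

Definition spec_independent (S : step -> Prop) : Prop :=
  forall d1 d2 X, S d1 -> S d2 -> lowering d1 d2 X -> cong_lowering d1 d2 X.

Definition spec_indep_sched_rule (S : step -> Prop) : Prop :=
  complete S /\ spec_independent S.

(* Main.v *)
From HB Require Import structures.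
Require Import Defs.
From mathcomp Require Import all_boot all_order all_algebra.
From Stdlib Require List.
From mathcomp Require Import zify.
Set Implicit Arguments. Unset Strict Implicit. Unset Printing Implicit Defensive.
Import Order.TTheory GRing.Theory Num.Theory.


Fixpoint term_ind2 (P : term -> Prop) (HV : forall x, P (Var x))
  (HF : forall f ts, List.Forall P ts -> P (Fun f ts)) (t : term) : P t :=
  match t with
  | Var x => HV x
  | Fun f ts => HF f ts ((fix aux (l : seq term) : List.Forall P l :=
       match l with
       | [::] => List.Forall_nil P
       | u :: l' => List.Forall_cons u (term_ind2 HV HF u) (aux l')
       end) ts)
  end.

Fixpoint enc (t : term) : GenTree.tree nat :=
  match t with Var x => GenTree.Leaf x | Fun f ts => GenTree.Node f (map enc ts) end.
Fixpoint dec (g : GenTree.tree nat) : term :=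
  match g with GenTree.Leaf x => Var x | GenTree.Node f gs => Fun f (map dec gs) end.
Lemma encK : cancel enc dec.
Proof.
elim/term_ind2 => [x|f ts H] //=; congr Fun; elim: H => //= u l Hu _ IH.
by rewrite Hu IH.
Qed.
HB.instance Definition _ := Equality.copy term (can_type encK).

Fixpoint tvars (t : term) : seq nat :=
  match t with Var x => [:: x] | Fun _ ts => flatten (map tvars ts) end.

Lemma var_in_termE v t : var_in_term v t <-> v \in tvars t.
Proof.
elim/term_ind2: t => [x|f ts H] /=; first by rewrite inE; split => [->|/eqP ->].
elim: H => //= u l Hu _ IH; rewrite mem_cat; split.
  by case=> [/Hu ->|/IH ->] //; rewrite orbT.
by case/orP => [/Hu|/IH]; auto.
Qed.

Lemma term_subst_ext s1 s2 t : {in tvars t, s1 =1 s2} -> term_subst s1 t = term_subst s2 t.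
Proof.
elim/term_ind2: t => [x|f ts H] /=; first by move=> h; apply: h; rewrite inE.
move=> h; congr Fun; elim: H h => //= u l Hu _ IH h.
rewrite Hu ?IH // => y hy; apply: h; rewrite mem_cat hy ?orbT //.
Qed.

Lemma term_subst_comp s1 s2 t :
  term_subst s1 (term_subst s2 t) = term_subst (fun v => term_subst s1 (s2 v)) t.
Proof.
elim/term_ind2: t => [x|f ts H] //=; congr Fun; rewrite -map_comp.
by elim: H => //= u l Hu _ IH; rewrite Hu IH.
Qed.

Lemma term_subst_id t : term_subst Var t = t.
Proof.
elim/term_ind2: t => [x|f ts H] //=; congr Fun.
by elim: H => //= u l Hu _ IH; rewrite Hu IH.
Qed.

Lemma tvars_subst s t v :
  v \in tvars (term_subst s t) -> exists2 u, u \in tvars t & v \in tvars (s u).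
Proof.
elim/term_ind2: t => [x|f ts H] /=; first by move=> h; exists x; rewrite ?inE.
elim: H => //= u l Hu _ IH; rewrite !mem_cat => /orP [/Hu [w h1 h2]|/IH [w h1 h2]];
  exists w => //; rewrite mem_cat h1 ?orbT //.
Qed.

Lemma tvars_subst2 s t u v :
  u \in tvars t -> v \in tvars (s u) -> v \in tvars (term_subst s t).
Proof.
elim/term_ind2: t => [x|f ts H] /=; first by rewrite inE => /eqP ->.
elim: H => //= w l Hw _ IH; rewrite !mem_cat => /orP [h1 h2|h1 h2].
  by rewrite (Hw h1 h2).
by rewrite (IH h1 h2) orbT.
Qed.


Definition eqn := (term * term)%type.
Definition unifE (s : subst) (E : seq eqn) : bool :=
  all (fun p : eqn => term_subst s p.1 == term_subst s p.2) E.
Definition varsE (E : seq eqn) : seq nat :=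
  flatten (map (fun p : eqn => tvars p.1 ++ tvars p.2) E).
Fixpoint tsize (t : term) : nat :=
  match t with Var _ => 1 | Fun _ ts => (sumn (map tsize ts)).+1 end.
Definition sizeE (E : seq eqn) : nat := sumn (map (fun p : eqn => tsize p.1 + tsize p.2) E).
Definition nv (E : seq eqn) := size (undup (varsE E)).

Definition MGU (E : seq eqn) (th : subst) : Prop :=
  [/\ unifE th E,
      (forall dl, unifE dl E -> forall v, dl v = term_subst dl (th v))
    & (forall v, var_of_subst th v -> v \in varsE E)].

Lemma nv_sub E1 E2 : {subset varsE E1 <= varsE E2} -> nv E1 <= nv E2.
Proof.
move=> h; apply: uniq_leq_size; first exact: undup_uniq.
by move=> y; rewrite !mem_undup; apply: h.
Qed.

Lemma nv_sub_lt E1 E2 x : {subset varsE E1 <= varsE E2} -> x \in varsE E2 ->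
  x \notin varsE E1 -> nv E1 < nv E2.
Proof.
move=> h hx hn; rewrite /nv.
have -> : (size (undup (varsE E1))).+1 = size (x :: undup (varsE E1)) by [].
apply: uniq_leq_size; first by rewrite /= mem_undup hn undup_uniq.
by move=> y; rewrite inE !mem_undup => /orP [/eqP ->|/h].
Qed.

Lemma occ_le s x t : x \in tvars t -> tsize (s x) <= tsize (term_subst s t).
Proof.
elim/term_ind2: t => [y|f ts H] /=; first by rewrite inE => /eqP ->.
elim: H => //= u l Hu _ IH; rewrite mem_cat => /orP [/Hu h|/IH h]; lia.
Qed.

Lemma occ_lt s x t : x \in tvars t -> t <> Var x -> tsize (s x) < tsize (term_subst s t).
Proof.
case: t => [y|f ts] /=; first by rewrite inE => /eqP -> .
move=> h _; elim: ts h => //= u l IH; rewrite mem_cat => /orP [/(occ_le s) h|/IH h]; lia.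
Qed.

Lemma unifE_cons s p E : unifE s (p :: E) = (term_subst s p.1 == term_subst s p.2) && unifE s E.
Proof. by []. Qed.

Lemma varsE_cons p E : varsE (p :: E) = tvars p.1 ++ tvars p.2 ++ varsE E.
Proof. by rewrite /varsE /= catA. Qed.

Lemma elim_var x t E :
  (forall E', nv E' < nv ((Var x, t) :: E) -> (exists dl, unifE dl E') -> exists th, MGU E' th) ->
  t <> Var x -> (exists dl, unifE dl ((Var x, t) :: E)) -> exists th, MGU ((Var x, t) :: E) th.
Proof.
move=> IH neq [dl]; rewrite unifE_cons /= => /andP [/eqP hx hE].
have nox : x \notin tvars t.
  apply/negP => ht; have := occ_lt dl ht neq; rewrite -hx; lia.
pose sg := fun v => if v == x then t else Var v.
have sgt : term_subst sg t = t.
  rewrite -[RHS]term_subst_id; apply: term_subst_ext => v hv /=.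
  rewrite /sg; case: eqP => // ev; by move: hv; rewrite ev (negbTE nox).
pose E' := map (fun p : eqn => (term_subst sg p.1, term_subst sg p.2)) E.
have unifsg : forall d, d x = term_subst d t -> forall u, term_subst d (term_subst sg u) = term_subst d u.
  move=> d hd u; rewrite term_subst_comp; apply: term_subst_ext => v _ /=.
  by rewrite /sg; case: eqP => [->|]. 
have unifE' : forall d, d x = term_subst d t -> unifE d E' = unifE d E.
  move=> d hd; rewrite /E' /unifE all_map; apply: eq_all => p /=.
  by rewrite !unifsg.
have varsE' : forall v, v \in varsE E' -> (v \in varsE E) || (v \in tvars t).
  move=> v; rewrite /varsE /E' -map_comp => /flatten_mapP [p hp] /=.
  have hh : forall u, v \in tvars (term_subst sg u) -> (v \in tvars u) || (v \in tvars t).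
    move=> u /tvars_subst [w hw]; rewrite /sg; case: eqP => [_ ->|_]; first by rewrite orbT.
    by rewrite inE => /eqP ->; rewrite hw.
  rewrite mem_cat => /orP [/hh|/hh] /orP [h|->]; rewrite ?orbT //;
  apply/orP; left; apply/flatten_mapP; exists p => //; rewrite mem_cat h ?orbT //.
have noxE' : x \notin varsE E'.
  apply/negP; rewrite /varsE /E' -map_comp => /flatten_mapP [p hp] /=.
  have hh : forall u, x \notin tvars (term_subst sg u).
    move=> u; apply/negP => /tvars_subst [w hw]; rewrite /sg; case: eqP => [_|nw].
      by rewrite (negbTE nox).
    by rewrite inE => /eqP ex; apply: nw.
  by rewrite mem_cat (negbTE (hh _)) (negbTE (hh _)).
have [th' [u1 g1 r1]] : exists th', MGU E' th'.
  apply: IH; last by exists dl; rewrite unifE' //.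
  apply: (nv_sub_lt (x := x)) => //; last by rewrite varsE_cons /= inE eqxx.
  move=> v /varsE' /orP [h|h]; rewrite varsE_cons !mem_cat h ?orbT //.
exists (fun v => term_subst th' (sg v)); split.
- have e2 : forall u, term_subst (fun v => term_subst th' (sg v)) u = term_subst th' (term_subst sg u).
    by move=> u; rewrite term_subst_comp.
  rewrite unifE_cons; apply/andP; split.
    by rewrite !e2 sgt /= /sg eqxx.
  move: u1; rewrite /unifE /E' all_map; apply: sub_all => p /=.
  by rewrite !e2.
- move=> d; rewrite unifE_cons => /andP [/eqP hd hdE] v.
  have hd' : d x = term_subst d t by [].
  rewrite /= term_subst_comp.
  have -> : term_subst (fun w => term_subst d (th' w)) (sg v) = term_subst d (sg v).
    by apply: term_subst_ext => w _; rewrite -g1 // unifE'.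
  by rewrite /sg; case: eqP => [->|].
- move=> v [hv|[w hw hvw]].
  + rewrite varsE_cons; case: (v =P x) => [->|nvx]; first by rewrite inE eqxx.
    have : var_of_subst th' v by left; move: hv; rewrite /sg; case: eqP.
    by move/r1/varsE' => /orP [h|h]; rewrite !mem_cat h ?orbT.
  + rewrite varsE_cons; move: hw hvw; rewrite /sg; case: (w =P x) => [ew|nw] hw hvw.
    * move: hvw; rewrite var_in_termE => /tvars_subst [u hu].
      case: (th' u =P Var u) => [->|nu].
        by rewrite inE => /eqP ->; rewrite !mem_cat hu ?orbT.
      move=> hvu; have : var_of_subst th' v by right; exists u => //; rewrite var_in_termE.
      by move/r1/varsE' => /orP [h|h]; rewrite !mem_cat h ?orbT.
    * have : var_of_subst th' v by right; exists w.
      by move/r1/varsE' => /orP [h|h]; rewrite !mem_cat h ?orbT.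
Qed.

Lemma MGU_transfer E E' th : (forall d, unifE d E' = unifE d E) ->
  {subset varsE E' <= varsE E} -> MGU E' th -> MGU E th.
Proof.
move=> hu hv [u1 g1 r1]; split.
- by rewrite -hu.
- by move=> d; rewrite -hu; apply: g1.
- by move=> v /r1 /hv.
Qed.

Lemma unifE_cat d E1 E2 : unifE d (E1 ++ E2) = unifE d E1 && unifE d E2.
Proof. by rewrite /unifE all_cat. Qed.
Lemma varsE_cat E1 E2 : varsE (E1 ++ E2) = varsE E1 ++ varsE E2.
Proof. by rewrite /varsE map_cat flatten_cat. Qed.
Lemma sizeE_cat E1 E2 : sizeE (E1 ++ E2) = sizeE E1 + sizeE E2.
Proof. by rewrite /sizeE map_cat sumn_cat. Qed.

Lemma unifE_zip d ts us : size ts = size us ->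
  unifE d (zip ts us) = (map (term_subst d) ts == map (term_subst d) us).
Proof.
elim: ts us => [|t ts IH] [|u us] //= [hs].
by move: (IH us hs); rewrite /unifE /= => ->; rewrite eqseq_cons.
Qed.

Lemma varsE_zip ts us :
  {subset varsE (zip ts us) <= flatten (map tvars ts) ++ flatten (map tvars us)}.
Proof.
elim: ts us => [|t ts IH] [|u us] //= v.
rewrite varsE_cons /= !mem_cat => /orP [->//|/orP [->|/IH]]; first by rewrite !orbT.
by rewrite mem_cat => /orP [->|->]; rewrite ?orbT.
Qed.

Lemma sizeE_zip ts us : size ts = size us ->
  sizeE (zip ts us) = sumn (map tsize ts) + sumn (map tsize us).
Proof.
elim: ts us => [|t ts IH] [|u us] //= [hs].
rewrite /sizeE /= -/(sizeE _) IH //; lia.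
Qed.

Lemma unify_aux n : forall m E, nv E < n -> sizeE E < m ->
  (exists dl, unifE dl E) -> exists th, MGU E th.
Proof.
elim: n => [//|n IHn] m; elim: m => [//|m IHm] E hn hm hu.
case: E hn hm hu => [|[t u] E] hn hm hu.
  exists Var; split => //; try by move=> d _ v.
  by move=> v [h|[w h _]]; case: h.
have IHv : forall E', nv E' < nv ((t, u) :: E) -> (exists dl, unifE dl E') -> exists th, MGU E' th.
  move=> E' h1 h2; apply: (IHn (sizeE E').+1) => //; exact: leq_trans h1 hn.
have szc : sizeE ((t, u) :: E) = tsize t + tsize u + sizeE E by [].
case: t u hn hm hu IHv szc => [x|f ts] [y|g us] hn hm hu IHv szc.
- case: (x =P y) => [exy|nxy].
  + subst y; have [th hth] : exists th, MGU E th.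
      apply: IHm.
      * apply: leq_ltn_trans hn; apply: nv_sub => v hv.
        by rewrite varsE_cons !mem_cat hv !orbT.
      * move: hm; rewrite szc /=; lia.
      * by case: hu => dl; rewrite unifE_cons => /andP [_ h]; exists dl.
    exists th; apply: MGU_transfer hth => //.
      by move=> d; rewrite unifE_cons /= eqxx.
    by move=> v hv; rewrite varsE_cons !mem_cat hv !orbT.
  + by apply: elim_var => // [[]] /esym.
- by apply: elim_var.
- have [th hth] : exists th, MGU ((Var y, Fun f ts) :: E) th.
    apply: elim_var => //.
      move=> E' h; apply: IHv; apply: leq_trans h _; apply: nv_sub => v.
      by rewrite !varsE_cons !mem_cat; case/or3P => ->; rewrite ?orbT.
    case: hu => dl /andP [/eqP h1 h2].
    by exists dl; apply/andP; split => //; apply/eqP.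
  exists th; apply: MGU_transfer hth.
    by move=> d; rewrite !unifE_cons eq_sym.
  by move=> v; rewrite !varsE_cons !mem_cat; case/or3P => ->; rewrite ?orbT.
- case: hu => dl; rewrite unifE_cons /= => /andP [/eqP [efg hmap] hE]; subst g.
  have hs : size ts = size us by rewrite -(size_map (term_subst dl) ts) hmap size_map.
  have [th hth] : exists th, MGU (zip ts us ++ E) th.
    apply: IHm.
    * apply: leq_ltn_trans hn; apply: nv_sub => v.
      rewrite varsE_cat mem_cat => /orP [/varsE_zip|hv]; rewrite varsE_cons //=.
        by rewrite !mem_cat => /orP [->|->]; rewrite ?orbT.
      by rewrite !mem_cat hv !orbT.
    * move: hm; rewrite sizeE_cat sizeE_zip // szc /=; lia.
    * by exists dl; rewrite unifE_cat unifE_zip // hmap eqxx.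
  exists th; apply: MGU_transfer hth.
    move=> d; rewrite unifE_cat unifE_zip // unifE_cons /=.
    by congr andb; apply/eqP/eqP => [->|[->]].
  move=> v; rewrite varsE_cat mem_cat => /orP [/varsE_zip|hv]; rewrite varsE_cons //=.
    by rewrite !mem_cat => /orP [->|->]; rewrite ?orbT.
  by rewrite !mem_cat hv !orbT.
Qed.

Lemma unify E : (exists dl, unifE dl E) -> exists th, MGU E th.
Proof. exact: (@unify_aux (nv E).+1 (sizeE E).+1 E). Qed.

Lemma flatten_tvars_In v (l : seq term) :
  v \in flatten (map tvars l) -> exists2 t, List.In t l & var_in_term v t.
Proof.
elim: l => //= t l IH; rewrite mem_cat => /orP [h|/IH [u h1 h2]].
  by exists t; [left | rewrite var_in_termE].
by exists u; [right|].
Qed.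

Lemma In_flatten_tvars v (l : seq term) t :
  List.In t l -> var_in_term v t -> v \in flatten (map tvars l).
Proof.
elim: l => //= u l IH [<- /var_in_termE h|h1 h2]; rewrite mem_cat ?h //.
by rewrite (IH h1 h2) orbT.
Qed.

Lemma atom_unify a b : (exists d, unifier d a b) -> exists th, idem_rel_mgu th a b.
Proof.
case=> d; case: a b => [p ts] [q us]; rewrite /unifier /atom_subst /= => -[epq hmap].
subst q.
have hs : size ts = size us by rewrite -(size_map (term_subst d) ts) hmap size_map.
have hu : exists dl, unifE dl (zip ts us) by exists d; rewrite unifE_zip // hmap.
have [th [u1 g1 r1]] := unify hu.
exists th; split; [split|split].
- rewrite /unifier /atom_subst /=; congr pair; apply/eqP; by rewrite -unifE_zip.
- move=> dl; rewrite /unifier /atom_subst /= => -[hm]; exists dl => v; apply: g1.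
  by rewrite unifE_zip // hm.
- by move=> v; rewrite -g1.
- move=> v /r1 /varsE_zip; rewrite mem_cat => /orP [/flatten_tvars_In|/flatten_tvars_In] h;
  [left|right]; exact: h.
Qed.

Local Open Scope ring_scope.

Lemma inP (T : eqType) (x : T) s : List.In x s <-> x \in s.
Proof.
elim: s => //= y s IH; rewrite inE; split.
  by case=> [->|/IH ->]; rewrite ?eqxx ?orbT.
by case/orP => [/eqP ->|/IH]; auto.
Qed.

Lemma pdisjP (F G : pgoal) :
  prio_disjoint F G <-> (forall p, p \in map snd F -> p \in map snd G -> False).
Proof.
split.
  move=> h p /mapP [x hx ->] /mapP [y hy ey]; apply: (h x y); rewrite ?inP //.
move=> h x y /inP hx /inP hy exy; apply: (h x.2); apply/mapP; [exists x|exists y] => //.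
Qed.

Lemma pgoalE (G : pgoal) : is_pgoal G = sorted <%R (map snd G).
Proof. by rewrite /is_pgoal sorted_map. Qed.

Lemma ltp_trans : transitive (fun x y : patom => x.2 < y.2).
Proof. by move=> y x z /lt_trans h /h. Qed.
Lemma ltp_irr : irreflexive (fun x y : patom => x.2 < y.2).
Proof. by move=> x; rewrite ltxx. Qed.

Lemma pgoal_uniq G : is_pgoal G -> uniq (map snd G).
Proof. by rewrite pgoalE; apply: sorted_uniq; [apply: lt_trans| apply: ltxx]. Qed.

Lemma pgoal_uniq' G : is_pgoal G -> uniq G.
Proof. by apply: sorted_uniq; [apply: ltp_trans|apply: ltp_irr]. Qed.

Lemma pgoal_eq s1 s2 : is_pgoal s1 -> is_pgoal s2 -> s1 =i s2 -> s1 = s2.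
Proof. by apply: irr_sorted_eq; [apply: ltp_trans|apply: ltp_irr]. Qed.

Lemma mem_pplus x A B : x \in pplus A B = (x \in A) || (x \in B).
Proof. by rewrite /pplus mem_sort mem_cat. Qed.

Lemma perm_pplus A B : perm_eq (pplus A B) (A ++ B).
Proof. by rewrite /pplus perm_sort. Qed.

Lemma map_pplus (T : eqType) (f : patom -> T) A B x :
  (x \in map f (pplus A B)) = (x \in map f A) || (x \in map f B).
Proof.
rewrite -mem_cat -map_cat; apply: perm_mem; apply: perm_map; exact: perm_pplus.
Qed.

Lemma prios_pplus A B p : (p \in map snd (pplus A B)) = (p \in map snd A) || (p \in map snd B).
Proof. exact: map_pplus. Qed.

Lemma pplus_pgoal A B : is_pgoal A -> is_pgoal B -> prio_disjoint A B -> is_pgoal (pplus A B).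
Proof.
move=> hA hB /pdisjP hd.
have hs : sorted (fun x y : patom => x.2 <= y.2) (pplus A B).
  apply: sort_sorted => x y; exact: le_total.
have hu : uniq (map snd (pplus A B)).
  rewrite (perm_uniq (perm_map snd (perm_pplus A B))) map_cat cat_uniq.
  rewrite !pgoal_uniq //= andbT; apply/hasPn => p hp; apply/negP => hp'; exact: hd hp' hp.
have hs' : sorted <=%R (map snd (pplus A B)) by rewrite sorted_map.
by rewrite pgoalE lt_sorted_uniq_le hu hs'.
Qed.

Lemma prios_subst s G : map snd (pgoal_subst s G) = map snd G.
Proof. by rewrite /pgoal_subst -map_comp. Qed.
Lemma prios_shift pi G : map snd (pgoal_shift pi G) = map pi (map snd G).
Proof. by rewrite /pgoal_shift -!map_comp. Qed.

Lemma is_pgoal_subst s G : is_pgoal G -> is_pgoal (pgoal_subst s G).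
Proof. by rewrite !pgoalE prios_subst. Qed.

Lemma is_pgoal_shift pi G : shifting pi -> is_pgoal G -> is_pgoal (pgoal_shift pi G).
Proof.
move=> [hpi _] hG; rewrite pgoalE prios_shift sorted_map; rewrite pgoalE in hG.
by apply: sub_sorted hG => x y; apply: hpi.
Qed.

Lemma pdisj_prios A B A' B' : map snd A = map snd A' -> map snd B = map snd B' ->
  prio_disjoint A B -> prio_disjoint A' B'.
Proof. by move=> eA eB /pdisjP h; apply/pdisjP; rewrite -eA -eB. Qed.

Lemma pdisj_sym A B : prio_disjoint A B -> prio_disjoint B A.
Proof. by move=> /pdisjP h; apply/pdisjP => p h1 h2; exact: h h2 h1. Qed.

Lemma shifting_inj pi : shifting pi -> injective pi.
Proof. by case=> _ /bij_inj. Qed.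

Lemma pdisj_shift pi A B : shifting pi -> prio_disjoint A B ->
  prio_disjoint (pgoal_shift pi A) (pgoal_shift pi B).
Proof.
move=> hpi /pdisjP h; apply/pdisjP => p; rewrite !prios_shift.
move=> /mapP [q1 h1 ->] /mapP [q2 h2 /(shifting_inj hpi) e]; apply: (h q1) => //.
by rewrite e.
Qed.

Lemma pplus_subst s A B : pgoal_subst s (pplus A B) = pplus (pgoal_subst s A) (pgoal_subst s B).
Proof. by rewrite /pplus /pgoal_subst -map_cat sort_map. Qed.

Lemma pplus_shift pi A B : shifting pi -> is_pgoal A -> is_pgoal B -> prio_disjoint A B ->
  pgoal_shift pi (pplus A B) = pplus (pgoal_shift pi A) (pgoal_shift pi B).
Proof.
move=> hpi hA hB hd; apply: pgoal_eq.
- by apply: is_pgoal_shift => //; apply: pplus_pgoal.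
- apply: pplus_pgoal; try apply: is_pgoal_shift => //; exact: pdisj_shift.
- by move=> x; rewrite mem_pplus map_pplus.
Qed.

Lemma pplus_nil K : is_pgoal K -> pplus K [::] = K.
Proof.
move=> hK; rewrite /pplus cats0; apply: sorted_sort.
  by move=> y x z /le_trans h /h.
by apply: sub_sorted hK => x y /ltW.
Qed.

Lemma pplusC A B : is_pgoal A -> is_pgoal B -> prio_disjoint A B -> pplus A B = pplus B A.
Proof.
move=> hA hB hd; apply: pgoal_eq; try apply: pplus_pgoal => //; first exact: pdisj_sym.
by move=> x; rewrite !mem_pplus orbC.
Qed.

Lemma pdisj_mem A B x y : prio_disjoint A B -> x \in A -> y \in B -> x.2 <> y.2.
Proof. by move=> h /inP hx /inP hy; apply: h. Qed.

Lemma pdisj_consr A y B : prio_disjoint A (y :: B) -> prio_disjoint A B.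
Proof. by move=> h x z hx hz; apply: h => //; right. Qed.

Lemma head_split A y B z F : is_pgoal A -> is_pgoal (y :: B) -> prio_disjoint A (y :: B) ->
  pplus A (y :: B) = z :: F -> z \in y :: B -> z = y /\ F = pplus A B.
Proof.
move=> hA hyB hd e hz.
have hP : is_pgoal (z :: F) by rewrite -e; apply: pplus_pgoal.
have hminF := order_path_min ltp_trans hP.
have hminB := order_path_min ltp_trans hyB.
have uF := pgoal_uniq' hP; have uB := pgoal_uniq' hyB.
move: uF uB => /= /andP [zF _] /andP [yB _].
have ezy : z = y.
  apply/eqP; apply/negPn/negP => nzy.
  have : y \in z :: F by rewrite -e mem_pplus mem_head orbT.
  rewrite inE eq_sym (negbTE nzy) /= => yF.
  move: hz; rewrite inE (negbTE nzy) /= => zB.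
  have h1 := allP hminF y yF; have h2 := allP hminB z zB.
  by move: (lt_trans h1 h2); rewrite ltxx.
subst z; split => //.
apply: pgoal_eq.
- by move: hP => /= /path_sorted.
- apply: pplus_pgoal => //; [by move: hyB => /= /path_sorted | exact: pdisj_consr hd].
- move=> x; rewrite mem_pplus; apply/idP/idP.
  + move=> xF; have : x \in y :: F by rewrite mem_behead.
    rewrite -e mem_pplus inE; case/orP => [->//|/orP [/eqP exy|->]]; last by rewrite orbT.
    by move: zF; rewrite -exy xF.
  + case/orP => [xA|xB].
    * have : x \in y :: F by rewrite -e mem_pplus xA.
      rewrite inE; case/orP => [/eqP exy|//].
      by exfalso; apply: (pdisj_mem hd xA (mem_head y B)); rewrite exy.
    * have : x \in y :: F by rewrite -e mem_pplus inE xB !orbT.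
      rewrite inE; case/orP => [/eqP exy|//].
      by move: yB; rewrite -exy xB.
Qed.

Lemma pplus_cancel A B X : is_pgoal A -> is_pgoal B -> is_pgoal X ->
  prio_disjoint A X -> prio_disjoint B X -> pplus A X = pplus B X -> A = B.
Proof.
move=> hA hB hX dA dB e; apply: pgoal_eq => // x; apply/idP/idP => hx.
- have : x \in pplus B X by rewrite -e mem_pplus hx.
  rewrite mem_pplus => /orP [//|xX]; by exfalso; apply: (pdisj_mem dA hx xX).
- have : x \in pplus A X by rewrite e mem_pplus hx.
  rewrite mem_pplus => /orP [//|xX]; by exfalso; apply: (pdisj_mem dB hx xX).
Qed.

Local Close Scope ring_scope.

Definition avars (a : atom) : seq nat := flatten (map tvars a.2).
Definition pvars (G : pgoal) : seq nat := flatten (map (fun x : patom => avars x.1) G).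
Definition cvars (c : clause) : seq nat := avars (chead c) ++ pvars (cbody c).

Lemma var_in_atomE v a : var_in_atom v a <-> v \in avars a.
Proof.
split; first by case=> t h1 h2; apply: In_flatten_tvars h1 h2.
by move/flatten_tvars_In.
Qed.

Lemma pvarsP v G : reflect (exists2 x, x \in G & v \in avars x.1) (v \in pvars G).
Proof. exact: flatten_mapP. Qed.

Lemma var_in_pgoalE v G : var_in_pgoal v G <-> v \in pvars G.
Proof.
split.
  by case=> x /inP hx /var_in_atomE h; apply/pvarsP; exists x.
by case/pvarsP => x /inP hx /var_in_atomE h; exists x.
Qed.

Lemma avars_subst s a v : v \in avars (atom_subst s a) -> exists2 u, u \in avars a & v \in tvars (s u).
Proof.
rewrite /avars /atom_subst /= -map_comp => /flatten_mapP [t ht] /tvars_subst [u hu hv].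
by exists u => //; apply/flatten_mapP; exists t.
Qed.

Lemma avars_subst2 s a u v : u \in avars a -> v \in tvars (s u) -> v \in avars (atom_subst s a).
Proof.
rewrite /avars /atom_subst /= -map_comp => /flatten_mapP [t ht hu] hv.
apply/flatten_mapP; exists t => //; exact: tvars_subst2 hu hv.
Qed.

Lemma pvars_subst s G v : v \in pvars (pgoal_subst s G) -> exists2 u, u \in pvars G & v \in tvars (s u).
Proof.
case/pvarsP => y /mapP [x hx ->] /= /avars_subst [u hu hv].
by exists u => //; apply/pvarsP; exists x.
Qed.

Lemma pvars_shift pi G : pvars (pgoal_shift pi G) = pvars G.
Proof. by rewrite /pvars /pgoal_shift -map_comp. Qed.

Lemma pvars_pplus A B v : (v \in pvars (pplus A B)) = (v \in pvars A) || (v \in pvars B).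
Proof.
apply/pvarsP/orP.
  case=> x; rewrite mem_pplus => /orP [hx|hx] hv; [left|right]; apply/pvarsP; by exists x.
case=> /pvarsP [x hx hv]; exists x => //; by rewrite mem_pplus hx ?orbT.
Qed.

Lemma atom_subst_ext s1 s2 a : {in avars a, s1 =1 s2} -> atom_subst s1 a = atom_subst s2 a.
Proof.
move=> h; rewrite /atom_subst; congr pair; apply/eq_in_map => t ht.
apply: term_subst_ext => v hv; apply: h; apply/flatten_mapP; by exists t.
Qed.

Lemma pgoal_subst_ext s1 s2 G : {in pvars G, s1 =1 s2} -> pgoal_subst s1 G = pgoal_subst s2 G.
Proof.
move=> h; apply/eq_in_map => x hx /=; congr pair; apply: atom_subst_ext => v hv.
by apply: h; apply/pvarsP; exists x.
Qed.

Lemma atom_subst_comp s1 s2 a :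
  atom_subst s1 (atom_subst s2 a) = atom_subst (fun v => term_subst s1 (s2 v)) a.
Proof.
rewrite /atom_subst /= -map_comp; congr pair; apply: eq_map => t /=; exact: term_subst_comp.
Qed.

Lemma pgoal_subst_comp s1 s2 G :
  pgoal_subst s1 (pgoal_subst s2 G) = pgoal_subst (fun v => term_subst s1 (s2 v)) G.
Proof. rewrite /pgoal_subst -map_comp; apply: eq_map => x /=; by rewrite atom_subst_comp. Qed.

Lemma atom_subst_id a : atom_subst Var a = a.
Proof. case: a => p ts; rewrite /atom_subst /=; congr pair; elim: ts => //= t ts ->; by rewrite term_subst_id. Qed.

Lemma pgoal_subst_id G : pgoal_subst Var G = G.
Proof. rewrite /pgoal_subst; elim: G => //= x G ->; by rewrite atom_subst_id -surjective_pairing. Qed.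

Lemma pgoal_shift_id G : pgoal_shift (fun q => q) G = G.
Proof. rewrite /pgoal_shift; elim: G => //= x G ->; by rewrite -surjective_pairing. Qed.

Lemma shift_subst pi s G : pgoal_shift pi (pgoal_subst s G) = pgoal_subst s (pgoal_shift pi G).
Proof. by rewrite /pgoal_shift /pgoal_subst -!map_comp. Qed.

Lemma shift_shift p1 p2 G : pgoal_shift p1 (pgoal_shift p2 G) = pgoal_shift (fun q => p1 (p2 q)) G.
Proof. by rewrite /pgoal_shift -!map_comp. Qed.

Definition bnd (s : seq nat) : nat := (foldr maxn 0 s).+1.
Lemma bndP v s : v \in s -> v < bnd s.
Proof.
rewrite /bnd; elim: s => //= x s IH; rewrite inE => /orP [/eqP ->|/IH h].
  by rewrite ltnS leq_maxl.
by apply: leq_trans h _; rewrite ltnS leq_maxr.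
Qed.

Lemma pvars_subst_vos th G v : v \in pvars (pgoal_subst th G) -> (v \in pvars G) \/ var_of_subst th v.
Proof.
case/pvars_subst => u hu hv; case: (th u =P Var u) => [e|ne].
  by move: hv; rewrite e inE => /eqP ->; left.
by right; right; exists u => //; rewrite var_in_termE.
Qed.

Lemma ren_clause_vars c xi v : var_in_ren_clause c xi v -> exists2 u, u \in cvars c & v = xi u.
Proof.
case=> [/var_in_atomE /avars_subst|/var_in_pgoalE /pvars_subst] [u hu];
  rewrite inE => /eqP ->; exists u => //; rewrite /cvars mem_cat hu ?orbT //.
Qed.

Local Open Scope ring_scope.

Definition xiM (M : nat) (v : nat) : nat :=
  (if (v < M)%N then v + M else if (v < M + M)%N then v - M else v)%N.

Lemma xiM_inv M v : xiM M (xiM M v) = v.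
Proof.
rewrite /xiM; case: (ltnP v M) => h1.
  rewrite ifF; last lia. rewrite ifT; lia.
case: (ltnP v (M + M)%N) => h2.
  rewrite ifT; lia.
rewrite ifF; last lia. rewrite ifF; lia.
Qed.

Lemma xiM_ren M : renaming (xiM M).
Proof. exact: (Bijective (xiM_inv M) (xiM_inv M)). Qed.

Lemma xiM_lt M v : (v < M)%N -> (M <= xiM M v < M + M)%N.
Proof. move=> h; rewrite /xiM h /=; lia. Qed.

Lemma shifting_id : shifting (fun q : rat => q).
Proof. split => //; exact: (Bijective (fun x => erefl x) (fun x => erefl x)). Qed.

Lemma shifting_comp p1 p2 : shifting p1 -> shifting p2 -> shifting (fun q => p1 (p2 q)).
Proof.
move=> [h1 b1] [h2 b2]; split; first by move=> x y /h2 /h1.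
exact: bij_comp b1 b2.
Qed.

Lemma shifting_inv tau : shifting tau ->
  exists g, [/\ shifting g, cancel tau g & cancel g tau].
Proof.
move=> [ht [g c1 c2]]; exists g; split => //; split; last by exists tau.
move=> x y hxy; rewrite ltNge; apply/negP => hyx.
have : tau (g y) <= tau (g x).
  move: hyx; rewrite le_eqVlt => /orP [/eqP ->//|/ht /ltW //].
by rewrite !c2 leNgt hxy.
Qed.

Lemma valid_pgoal d : valid_step d -> is_pgoal (s_goal d).
Proof. by case=> a [F [-> [h _]]]. Qed.

Lemma cong_same d d' a K : valid_step d -> valid_step d' ->
  s_goal d = a :: K -> s_goal d' = a :: K -> s_clause d' = s_clause d ->
  s_shift d' = s_shift d -> cong_lowering d d' [::].
Proof.
move=> vd vd' e e' ec es.
have hK : is_pgoal (a :: K) by rewrite -e; apply: valid_pgoal.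
have hK' : is_pgoal K by move: hK => /= /path_sorted.
exists Var, (fun q => q), a, K, (fun q => q); split; last split.
- rewrite /lowering_with; split; first done. split; first done.
  split; first exact: shifting_id. split; first done. split; first done. split; first done.
  rewrite pgoal_subst_id pgoal_shift_id pplus_nil //; split; first by move=> x y _ [].
  split; last by rewrite e' pgoal_subst_id pgoal_shift_id.
  move=> y /inP hy; have := order_path_min ltp_trans hK; by move/allP/(_ y hy).
- exact: shifting_id.
- by [].
- by rewrite pgoal_shift_id es ec.
Qed.

Lemma subtemplate_nil D : subtemplate [::] D = [::].
Proof.
elim: D => //= d D IH; case: (s_goal d) => //= a _; by rewrite /pgoal_subst /= IH.
Qed.

Lemma pdisj_pplusl A B C : prio_disjoint A C -> prio_disjoint B C -> prio_disjoint (pplus A B) C.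
Proof.
move=> /pdisjP h1 /pdisjP h2; apply/pdisjP => p; rewrite prios_pplus => /orP [/h1|/h2] //.
Qed.
Lemma pdisj_pplusr A B C : prio_disjoint C A -> prio_disjoint C B -> prio_disjoint C (pplus A B).
Proof. move=> h1 h2; apply: pdisj_sym; apply: pdisj_pplusl; exact: pdisj_sym. Qed.
Lemma pdisj_pplus_inv A B C : prio_disjoint (pplus A B) C -> prio_disjoint A C /\ prio_disjoint B C.
Proof.
move=> /pdisjP h; split; apply/pdisjP => p hp; apply: h; rewrite prios_pplus hp ?orbT //.
Qed.
Lemma pdisj_subst s1 s2 A B : prio_disjoint A B -> prio_disjoint (pgoal_subst s1 A) (pgoal_subst s2 B).
Proof. by apply: pdisj_prios; rewrite prios_subst. Qed.

Local Open Scope ring_scope.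

Lemma main_gen (S : step -> Prop) (V : seq nat) : spec_indep_sched_rule S ->
  forall D G X gamma tau (used : nat -> Prop) N,
  is_pgoal G -> is_pgoal X -> shifting tau ->
  prio_disjoint X (pgoal_shift tau (pgoal_subst gamma G)) ->
  chain (pplus X (pgoal_shift tau (pgoal_subst gamma G))) D -> via S D ->
  (forall v, used v -> (v < N)%N) -> (forall v, v \in pvars G -> used v) ->
  exists Dr, [/\ chain G Dr, apart used Dr, via S Dr,
     template Dr = subtemplate (pgoal_shift tau (pgoal_subst gamma G)) D
     & forall v, nvar Dr v -> v \notin V].
Proof.
move=> [[SV Sex Scong] Sind].
elim=> [|d2 D IH] G X gamma tau used N hG hX htau hXP hch hvia hN hGu.
  by exists [::]; split => // v [d []].
set P := pgoal_shift tau (pgoal_subst gamma G).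
have hP : is_pgoal P by apply: is_pgoal_shift => //; apply: is_pgoal_subst.
case: hch => eg hv2 hch.
have Sd2 : S d2 by apply: hvia; left.
have hvia' : via S D by move=> d hd; apply: hvia; right.
have hv2' := hv2.
case: hv2' => a2 [F2 [eg2 [hpg2 [hcl [hren2 [hdis2 [hmgu2 [hsh2 [hpd2 hres2]]]]]]]]].
set R2 := ren_body d2.
set th2 := s_mgu d2.
have hR2 : is_pgoal R2 by apply: is_pgoal_shift => //; apply: is_pgoal_subst.
have eXP : pplus X P = a2 :: F2 by rewrite -eg eg2.
have a2in : a2 \in pplus X P by rewrite eXP mem_head.
rewrite /= eg2.
case: (boolP (a2.2 \in map snd P)) => hin.
- have a2P : a2 \in P.
    move: a2in; rewrite mem_pplus => /orP [h|//]; exfalso.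
    exact: (proj1 (pdisjP _ _) hXP _ (map_f snd h) hin).
  have [a [K eG]] : exists a K, G = a :: K.
    move: a2P; rewrite /P; case: (G) => [|a K] //; by exists a, K.
  subst G.
  set KT := pgoal_shift tau (pgoal_subst gamma K).
  set a' := (atom_subst gamma a.1, tau a.2).
  have eP : P = a' :: KT by [].
  have hXP' : prio_disjoint X (a' :: KT) by rewrite -eP.
  have [ea2 eF2] : a2 = a' /\ F2 = pplus X KT.
    by apply: head_split => //; rewrite -?eP.
  subst a2 F2.
  have hK : is_pgoal K by move: hG => /= /path_sorted.
  have hKT : is_pgoal KT by apply: is_pgoal_shift => //; apply: is_pgoal_subst.
  have hXKT : prio_disjoint X KT := pdisj_consr hXP'.
  have [hXR2 hKTR2] := pdisj_pplus_inv hpd2.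
  set c := s_clause d2.
  set B := cbody c.
  set h := chead c.
  set xi2 := s_ren d2.
  set pi2 := s_shift d2.
  set M := maxn N (maxn (bnd V) (bnd (cvars c))).
  have hMN : (N <= M)%N by rewrite leq_maxl.
  have hMV : forall v, v \in V -> (v < M)%N.
    move=> v /bndP hv; apply: leq_trans hv _; by rewrite /M (leq_trans (leq_maxl _ _) (leq_maxr _ _)).
  have hMc : forall v, v \in cvars c -> (v < M)%N.
    move=> v /bndP hv; apply: leq_trans hv _; by rewrite /M (leq_trans (leq_maxr _ _) (leq_maxr _ _)).
  set xi' := xiM M.
  set delta := fun v => if (M <= v)%N then th2 (xi2 (xi' v)) else term_subst th2 (gamma v).
  have hdA : forall v, v \in pvars (a :: K) -> delta v = term_subst th2 (gamma v).
    move=> v /hGu /hN hv; rewrite /delta ifF //; apply/negbTE; rewrite -ltnNge.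
    exact: leq_trans hv hMN.
  have hdB : forall u, u \in cvars c -> delta (xi' u) = th2 (xi2 u).
    move=> u /hMc hu; have := xiM_lt hu => /andP [h1 _].
    by rewrite /delta h1 /xi' xiM_inv.
  have pvA : forall v, v \in avars a.1 -> v \in pvars (a :: K).
    by move=> v hv; rewrite /pvars /= mem_cat hv.
  have pvK : forall v, v \in pvars K -> v \in pvars (a :: K).
    by move=> v hv; rewrite /pvars /= mem_cat hv orbT.
  have hunif : unifier delta a.1 (atom_subst (ren_subst xi') h).
    rewrite /unifier atom_subst_comp.
    have -> : atom_subst delta a.1 = atom_subst th2 (atom_subst gamma a.1).
      rewrite atom_subst_comp; apply: atom_subst_ext => v hv; apply: hdA; exact: pvA.
    have -> : atom_subst (fun v => term_subst delta (ren_subst xi' v)) h =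
              atom_subst th2 (atom_subst (ren_subst xi2) h).
      rewrite atom_subst_comp; apply: atom_subst_ext => u hu /=; apply: hdB.
      by rewrite /cvars mem_cat hu.
    by case: hmgu2 => [[hu2 _] _].
  have [th1 hth1] := atom_unify (ex_intro _ delta hunif).
  have [g [hg cg1 cg2]] := shifting_inv htau.
  set pi1 := fun q => g (pi2 q).
  have hfresh : forall v, var_in_pgoal v (a :: K) -> ~ var_in_ren_clause c xi' v.
    move=> v /var_in_pgoalE /hGu /hN hvN /ren_clause_vars [u /hMc hu ev].
    have := xiM_lt hu; rewrite -/xi' -ev; lia.
  have hRB : forall pi s, map snd (pgoal_shift pi (pgoal_subst s B)) = map pi (map snd B).
    by move=> pi s; rewrite prios_shift prios_subst.
  have hR2p : map snd R2 = map pi2 (map snd B) by rewrite /R2 /ren_body hRB.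
  have hdpre : valid_step (Step (a :: K) c xi' th1 pi1
          (pgoal_subst th1 (pplus K (pgoal_shift pi1 (pgoal_subst (ren_subst xi') B))))).
    exists a, K; split => //; split => //; split => //; split; first exact: xiM_ren.
    split; first exact: hfresh. split; first exact: hth1.
    split; first exact: shifting_comp.
    split => //; apply/pdisjP => p hpK; rewrite /ren_body /= hRB => /mapP [b hb ep].
    apply: (proj1 (pdisjP _ _) hKTR2 (tau p)).
      by rewrite /KT prios_shift prios_subst map_f.
    by rewrite hR2p ep /pi1 cg2 map_f.
  have [d0 [Sd0 eg0 ec0]] := Sex (a :: K) c (ex_intro _ _ (And3 hdpre erefl erefl)).
  have hv0 := SV d0 Sd0.
  have hv0' := hv0.
  case: hv0' => a0 [F0 [eg0' [_ [_ [_ [_ [_ [hsh0 [hpd0 _]]]]]]]]].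
  have eF0 : F0 = K by move: eg0'; rewrite eg0 => -[_ ->].
  subst F0.
  set pi0 := s_shift d0.
  set B1 := pgoal_shift pi0 (pgoal_subst (ren_subst xi') B).
  set d1 := Step (a :: K) c xi' th1 pi0 (pgoal_subst th1 (pplus K B1)).
  have hKB1 : prio_disjoint K B1.
    move: hpd0; apply: pdisj_prios => //; by rewrite /ren_body hRB ec0.
  have hv1 : valid_step d1.
    exists a, K; split => //; split => //; split => //; split; first exact: xiM_ren.
    split; first exact: hfresh. split; first exact: hth1.
    split; first exact: hsh0. by split.
  have Sd1 : S d1.
    apply: (Scong d0 d1 Sd0 hv1); split; exists [::].
      by apply: (cong_same (a:=a) (K:=K)).
    by apply: (cong_same (a:=a) (K:=K)).
  have ePKX : pplus KT X = pplus X KT by apply: pplusC => //; exact: pdisj_sym.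
  have hlow : lowering d1 d2 X.
    exists gamma, tau, a, K; split => //; split => //; split => //; split => //; split => //.
    split => //; split; first exact: pdisj_sym.
    split; last by rewrite eg2 ePKX.
    move=> y /inP; rewrite ePKX => hy.
    exact: (allP (order_path_min ltp_trans hpg2) y hy).
  have [lam' [sig' [a3 [K3 [rho [hlw [hrho hKrho hBrho]]]]]]] := Sind d1 d2 X Sd1 Sd2 hlow.
  case: hlw => _ [_ [hsig' [_ [eg1 [_ [hpd3 [_ eg2']]]]]]].
  move: eg1 => /= [ea3 eK3]; subst a3 K3.
  have eKL : pgoal_shift sig' (pgoal_subst lam' K) = KT.
    apply: (pplus_cancel (X := X)) => //.
    - by apply: is_pgoal_shift => //; apply: is_pgoal_subst.
    - exact: pdisj_sym.
    - by move: eg2'; rewrite eg2 => -[_ _ e]; rewrite -e ePKX.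
  have erho : {in map snd K, rho =1 tau}.
    apply/eq_in_map.
    have := congr1 (map snd) hKrho; rewrite !prios_shift => ->.
    by have := congr1 (map snd) eKL; rewrite /KT !prios_shift !prios_subst.
  have erhoK : forall s, pgoal_shift rho (pgoal_subst s K) = pgoal_shift tau (pgoal_subst s K).
    move=> s; rewrite /pgoal_shift /pgoal_subst -!map_comp; apply/eq_in_map => x hx /=.
    by rewrite erho // map_f.
  have [eta heta] : more_general th1 delta by case: hth1 => [[_ hg1] _]; apply: hg1.
  set G' := pgoal_subst th1 (pplus K B1).
  set X'' := pgoal_subst th2 X.
  have hB : is_pgoal B := hcl.
  have hB1 : is_pgoal B1 by apply: is_pgoal_shift => //; apply: is_pgoal_subst.
  have hG' : is_pgoal G' by apply: is_pgoal_subst; apply: pplus_pgoal.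
  set s2 := fun v => term_subst th2 (ren_subst xi2 v).
  have eK : pgoal_shift rho (pgoal_subst delta K) = pgoal_subst th2 KT.
    have -> : pgoal_subst delta K = pgoal_subst (fun v => term_subst th2 (gamma v)) K.
      apply: pgoal_subst_ext => v hv; apply: hdA; exact: pvK.
    by rewrite erhoK /KT -shift_subst pgoal_subst_comp.
  have eB : pgoal_shift rho (pgoal_subst delta B1) = pgoal_subst th2 R2.
    have -> : pgoal_subst delta B1 = pgoal_shift pi0 (pgoal_subst s2 B).
      rewrite /B1 -shift_subst pgoal_subst_comp; congr pgoal_shift.
      apply: pgoal_subst_ext => u hu /=; rewrite /s2 /= hdB //.
      by rewrite /cvars mem_cat hu orbT.
    rewrite shift_subst shift_subst.
    have -> : pgoal_shift rho (pgoal_shift pi0 B) = pgoal_shift pi2 B by exact: hBrho.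
    by rewrite /R2 /ren_body -/pi2 -/c -/B /s2 -pgoal_subst_comp shift_subst.
  have eT : pgoal_shift rho (pgoal_subst eta G') = pgoal_subst th2 (pplus KT R2).
    rewrite /G' pgoal_subst_comp.
    have -> : pgoal_subst (fun v => term_subst eta (th1 v)) (pplus K B1) = pgoal_subst delta (pplus K B1).
      by apply: pgoal_subst_ext => v _; rewrite heta.
    rewrite pplus_subst pplus_shift //; last 3 first.
    - exact: is_pgoal_subst.
    - exact: is_pgoal_subst.
    - exact: pdisj_subst.
    by rewrite eK eB -pplus_subst.
  have eres : s_res d2 = pplus X'' (pgoal_subst th2 (pplus KT R2)).
    rewrite hres2 /X'' -pplus_subst; congr pgoal_subst; apply: pgoal_eq.
    + apply: pplus_pgoal => //; exact: pplus_pgoal.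
    + apply: pplus_pgoal => //; first exact: pplus_pgoal.
      exact: pdisj_pplusr.
    + move=> x; rewrite !mem_pplus.
      by case: (x \in X); case: (x \in KT); case: (x \in R2).
  set used' := fun v => used v \/ var_in_ren_clause c xi' v.
  have hN' : forall v, used' v -> (v < M + M)%N.
    move=> v [/hN hv|/ren_clause_vars [u /hMc hu ->]].
      by apply: leq_trans hv (leq_trans hMN (leq_addr _ _)).
    by have := xiM_lt hu => /andP [].
  have hGu' : forall v, v \in pvars G' -> used' v.
    move=> v /pvars_subst_vos [|hvos].
      rewrite pvars_pplus => /orP [hv|].
        by left; apply: hGu; exact: pvK.
      rewrite /B1 pvars_shift => hv; right; right; exact/var_in_pgoalE.
    case: hth1 => _ [_ hrel]; case: (hrel v hvos) => /var_in_atomE hv.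
      by left; apply: hGu; exact: pvA.
    by right; left; exact/var_in_atomE.
  have hdisj : prio_disjoint X'' (pgoal_shift rho (pgoal_subst eta G')).
    by rewrite eT; apply: pdisj_subst; apply: pdisj_pplusr.
  have hch' : chain (pplus X'' (pgoal_shift rho (pgoal_subst eta G'))) D by rewrite eT -eres.
  have [Dr [c1 c2 c3 c4 c5]] :=
    IH G' X'' eta rho used' (M + M)%N hG' (is_pgoal_subst th2 hX) hrho hdisj hch' hvia' hN' hGu'.
  exists (d1 :: Dr); split.
  + by split.
  + split => //; move=> v /ren_clause_vars [u /hMc hu ->] /hN h2.
    have /andP [h1 _] := xiM_lt hu.
    by move: (leq_ltn_trans h1 h2); rewrite ltnNge hMN.
  + by move=> d [<-|/c3].
  + rewrite /= c4 eT; congr (_ :: subtemplate (pgoal_subst _ (pplus _ _)) _).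
    rewrite eqxx /= -/KT; apply/esym/all_filterP.
    apply/allP => x hx; have := allP (order_path_min ltp_trans hP) x hx.
    by rewrite lt_neqAle eq_sym => /andP [].
  + move=> v [d [<-|hd] hvd]; last by apply: c5; exists d.
    case/ren_clause_vars: hvd => u /hMc hu ->; apply/negP => /hMV h2.
    have /andP [h1 _] := xiM_lt hu.
    by move: (leq_ltn_trans h1 h2); rewrite ltnn.
- have a2X : a2 \in X.
    move: a2in; rewrite mem_pplus => /orP [//|h]; by rewrite (map_f snd h) in hin.
  clear eg a2in; case: X hX hXP eXP a2X hch => [//|x0 X1] hX hXP eXP a2X hch.
  have hdPX : prio_disjoint P (x0 :: X1) := pdisj_sym hXP.
  have [ea2 eF2] : a2 = x0 /\ F2 = pplus P X1.
    apply: (head_split hP hX hdPX) => //; by rewrite -(pplusC hX hP hXP).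
  subst a2 F2.
  have hX1 : is_pgoal X1 by move: hX => /= /path_sorted.
  have hPX1 : prio_disjoint P X1 := pdisj_consr hdPX.
  have [hPR2 hX1R2] := pdisj_pplus_inv hpd2.
  set g' := fun v => term_subst th2 (gamma v).
  set X'' := pgoal_subst th2 (pplus X1 R2).
  have eP' : pgoal_shift tau (pgoal_subst g' G) = pgoal_subst th2 P.
    by rewrite /P !shift_subst pgoal_subst_comp.
  have eres : s_res d2 = pplus X'' (pgoal_subst th2 P).
    rewrite hres2 /X'' -pplus_subst; congr pgoal_subst; apply: pgoal_eq.
    + apply: pplus_pgoal => //; apply: pplus_pgoal => //.
    + apply: pplus_pgoal => //; first exact: pplus_pgoal.
      apply: pdisj_pplusl; exact: pdisj_sym.
    + move=> x; rewrite !mem_pplus.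
      by case: (x \in P); case: (x \in X1); case: (x \in R2).
  have hX'' : is_pgoal X'' by apply: is_pgoal_subst; apply: pplus_pgoal.
  have hdisj : prio_disjoint X'' (pgoal_shift tau (pgoal_subst g' G)).
    rewrite eP'; apply: pdisj_subst; apply: pdisj_pplusl => //; exact: pdisj_sym.
  have hch' : chain (pplus X'' (pgoal_shift tau (pgoal_subst g' G))) D by rewrite eP' -eres.
  have [Dr [c1 c2 c3 c4 c5]] := IH G X'' g' tau used N hG hX'' htau hdisj hch' hvia' hN hGu.
  exists Dr; split => //.
  by rewrite c4 eP'.
Qed.


Theorem lemmaL3p2p1 (S : step -> Prop) (V : seq nat) (G X : pgoal)
    (gamma : subst) (tau : rat -> rat) (D : seq step) :
  spec_indep_sched_rule S ->
  is_pgoal G -> is_pgoal X -> shifting tau ->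
  prio_disjoint X (pgoal_shift tau (pgoal_subst gamma G)) ->
  pSLD (pplus X (pgoal_shift tau (pgoal_subst gamma G))) D -> via S D ->
  exists Dr : seq step,
    [/\ pSLD G Dr, via S Dr,
        template Dr = subtemplate (pgoal_shift tau (pgoal_subst gamma G)) D
      & forall v, nvar Dr v -> v \notin V].
Proof.
move=> hS hG hX htau hXP [hch _] hvia.
have [Dr [c1 c2 c3 c4 c5]] := @main_gen S V hS D G X gamma tau (fun v => var_in_pgoal v G)
  (bnd (pvars G)) hG hX htau hXP hch hvia
  (fun v h => bndP (proj1 (var_in_pgoalE v G) h)) (fun v h => proj2 (var_in_pgoalE v G) h).
by exists Dr; split.
Qed.
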